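(* Let $f^*$ be any maximum flow in $\mathcal{H}$ and $\mathcal{H}_{f^*}$ the residual graph. Let $V_1$ be a nonempty subset of $V$, $\Lambda_1=\{\lambda\in\Lambda:\lambda\subseteq V_1\}$, and $\mathcal{S}=\{s\}\cup V_1\cup\Lambda_1$. The following are equivalent: (1) $V_1$ induces an $h$-clique densest subgraph of $G$, i.e. $\rho_h(V_1)=\rho_h^*$; (2) $(\mathcal{S},V_\mathcal{H}\setminus\mathcal{S})$ is a minimum $s$-$t$ cut of $\mathcal{H}$; (3) there is no arc in $\mathcal{H}_{f^*}$ from a node of $\mathcal{S}$ to a node of $V_\mathcal{H}\setminus\mathcal{S}$.
   Context: Let $G=(V,E)$ be a finite simple undirected graph and $h\ge2$. An $h$-clique is a set of $h$ pairwise adjacent nodes; $\mu_h(G[W])$ counts $h$-cliques inside $W$; for nonempty $W$, $\rho_h(W)=\mu_h(G[W])/|W|$; $\rho_h^*=\max_{\emptyset\ne W\subseteq V}\rho_h(W)$; $deg_G(v,h)$ is the number of $h$-cliques containing $v$; $\Lambda$ is the set of $(h-1)$-cliques of $G$ contained in some $h$-clique. Flow network $\mathcal{H}=(V_\mathcal{H},E_\mathcal{H},c)$: $V_\mathcal{H}=V\cup\Lambda\cup\{s,t\}$; for $v\in V$: arcs $(s,v)$ cap. $deg_G(v,h)$, $(v,t)$ cap. $h\rho_h^*$, $(v,s),(t,v)$ cap. $0$; for $\lambda\in\Lambda$, $v\in\lambda$: $(\lambda,v)$ cap. $+\infty$, $(v,\lambda)$ cap. $0$; for $\lambda\in\Lambda$,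 $v\in V$ with $\lambda\cup\{v\}$ an $h$-clique: $(v,\lambda)$ cap. $1$, $(\lambda,v)$ cap. $0$; no other arcs. A flow $f$ assigns reals to arcs with $f(u,v)\le c(u,v)$, $f(v,u)=-f(u,v)$, and conservation at every node other than $s,t$; its value is $\sum_v f(s,v)$. The residual graph $\mathcal{H}_{f}$ is the directed graph on $V_\mathcal{H}$ having an arc $(u,v)$ whenever $(u,v)\in E_\mathcal{H}$ and $c(u,v)-f(u,v)>0$. Cut capacities are sums of capacities of arcs from $\mathcal{S}$ to its complement. *)

(* Defs.v *)
From HB Require Import structures.
From mathcomp Require Import all_boot all_order all_algebra.
From mathcomp Require Import reals constructive_ereal.
Set Implicit Arguments. Unset Strict Implicit. Unset Printing Implicit Defensive.
Import Order.TTheory GRing.Theory Num.Theory.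

Section Graph.
Variables (T : finType) (e : rel T).

Definition is_clique (A : {set T}) : bool :=
  [forall x in A, forall y in A, (x != y) ==> e x y].

Definition hclique (h : nat) (A : {set T}) : bool := is_clique A && (#|A| == h).

Definition mu (h : nat) (W : {set T}) : nat :=
  #|[set A : {set T} | hclique h A & A \subset W]|.

Definition hdeg (h : nat) (v : T) : nat :=
  #|[set A : {set T} | hclique h A & v \in A]|.

Definition Lam (h : nat) : {set {set T}} :=
  [set L : {set T} | hclique h.-1 L & [exists A : {set T}, hclique h A && (L \subset A)]].

Section Real.
Variable R : realType.
Local Open Scope ring_scope.

Definition rho (h : nat) (W : {set T}) : R := (mu h W)%:R / #|W|%:R.

Definition rho_star (h : nat) : R :=
  \big[Num.max/0]_(W : {set T} | W != set0) rho h W.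
End Real.
End Graph.

(* Nodes of the flow network: s, t, a node for each v in V, a node for each
   set of vertices; only the sets in Lambda are nodes of V_H (see VH). *)
Inductive node (T : finType) := Src | Snk | Vx of T | Lm of {set T}.
Arguments Src {T}. Arguments Snk {T}.

Definition node_enc (T : finType) (n : node T) : option bool + (T + {set T}) :=
  match n with
  | Src => inl (Some true) | Snk => inl (Some false)
  | Vx v => inr (inl v) | Lm l => inr (inr l) end.
Definition node_dec (T : finType) (x : option bool + (T + {set T})) : node T :=
  match x with
  | inl (Some true) => Src | inl _ => Snk
  | inr (inl v) => Vx v | inr (inr l) => Lm l end.
Lemma node_encK (T : finType) : cancel (@node_enc T) (@node_dec T).
Proof. by case. Qed.
HB.instance Definition _ (T : finType) := Finite.copy (node T) (can_type (@node_encK T)).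

Section Network.
Variables (T : finType) (e : rel T) (h : nat) (R : realType).
Local Open Scope ring_scope.

Definition VH : {set node T} :=
  [set Src; Snk] :|: ([set Vx v | v : T] :|: [set Lm l | l in Lam e h]).

Definition isarc (u w : node T) : bool :=
  match u, w with
  | Src, Vx _ | Vx _, Src | Vx _, Snk | Snk, Vx _ => true
  | Lm l, Vx v | Vx v, Lm l =>
      (l \in Lam e h) && ((v \in l) || hclique e h (v |: l))
  | _, _ => false
  end.

Local Open Scope ereal_scope.
(* capacities (only meaningful on arcs) *)
Definition cap (u w : node T) : \bar R :=
  match u, w with
  | Src, Vx v => ((hdeg e h v)%:R)%:E
  | Vx _, Snk => ((h%:R * rho_star e R h)%R)%:E
  | Lm l, Vx v => if v \in l then +oo else 0
  | Vx v, Lm l => if hclique e h (v |: l) then 1 else 0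
  | _, _ => 0
  end.

Definition is_flow (f : node T -> node T -> R) : Prop :=
  (forall u w, isarc u w -> (f u w)%:E <= cap u w /\ f w u = (- f u w)%R) /\
  (forall u, u \in VH -> u != Src -> u != Snk ->
     (\sum_(w | isarc u w) f u w)%R = 0%R).

Definition flow_value (f : node T -> node T -> R) : R :=
  (\sum_(v | isarc Src v) f Src v)%R.

Definition is_max_flow (f : node T -> node T -> R) : Prop :=
  is_flow f /\ forall g, is_flow g -> (flow_value g <= flow_value f)%R.

Definition resarc (f : node T -> node T -> R) (u w : node T) : bool :=
  isarc u w && ((f u w)%:E < cap u w).

Definition is_st_cut (S : {set node T}) : Prop :=
  [/\ S \subset VH, Src \in S & Snk \notin S].

Definition cut_cap (S : {set node T}) : \bar R :=
  \sum_(u in S) \sum_(w in VH :\: S | isarc u w) cap u w.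

Definition is_min_cut (S : {set node T}) : Prop :=
  is_st_cut S /\ forall S', is_st_cut S' -> cut_cap S <= cut_cap S'.

Definition Sset (V1 : {set T}) : {set node T} :=
  Src |: ([set Vx v | v in V1] :|: [set Lm l | l in [set l in Lam e h | l \subset V1]]).
End Network.

(* Main.v *)
Require Import Defs.
From HB Require Import structures.
From mathcomp Require Import all_boot all_order all_algebra.
From mathcomp Require Import reals constructive_ereal.
From mathcomp Require Import ring lra zify.
Import Order.TTheory GRing.Theory Num.Theory.
Local Open Scope ring_scope.

Lemma node_sum (T : finType) (R : nmodType) (F : node T -> R) :
  \sum_(u : node T) F u = F Src + F Snk + \sum_(v : T) F (Vx v) + \sum_(l : {set T}) F (Lm l).
Proof.
rewrite (reindex_onto (@node_dec T) (@node_enc T)); last by move=> i _; apply: node_encK.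
rewrite big_sumType /= big_sumType /=.
under [X in _ + (X + _) = _]eq_bigl do rewrite eqxx.
under [X in _ + (_ + X) = _]eq_bigl do rewrite eqxx.
rewrite !addrA; congr (_ + _ + _).
rewrite big_mkcond /= (bigD1 (Some true)) //= (bigD1 (Some false)) //= big1 ?addr0 //.
by case=> [[]|].
Qed.

Section Net.
Variables (R : realType) (T : finType) (e : rel T) (h : nat).
Local Notation N := (node T).
Local Notation isarc := (isarc e h).
Local Notation VH := (VH e h).

Lemma isarc_sym (u w : N) : isarc u w = isarc w u.
Proof. by case: u; case: w. Qed.

Lemma VH_Src : Src \in VH. Proof. by rewrite !inE eqxx. Qed.
Lemma VH_Snk : Snk \in VH. Proof. by rewrite !inE eqxx orbT. Qed.
Lemma VH_Vx v : Vx v \in VH.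
Proof. by rewrite !inE; apply/orP; right; apply/orP; left; apply/imsetP; exists v. Qed.
Lemma VH_Lm l : (Lm l \in VH) = (l \in Lam e h).
Proof.
rewrite /VH in_setU in_set2 in_setU /=; apply/idP/idP.
  by case/orP=> [/imsetP[v _ //]|/imsetP[l' Hl [->]]].
by move=> Hl; apply/orP; right; apply/imsetP; exists l.
Qed.

Lemma isarc_VH (u w : N) : isarc u w -> w \in VH.
Proof.
case: w => [||v|l]; rewrite ?VH_Src ?VH_Snk ?VH_Vx //.
by case: u => //= v /andP[]; rewrite VH_Lm.
Qed.

Variable f : N -> N -> R.
Hypothesis fl : is_flow e h f.

Lemma flow_cut (S : {set N}) : S \subset VH -> Src \in S -> Snk \notin S ->
  flow_value e h f = \sum_(u in S) \sum_(w in VH :\: S | isarc u w) f u w.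
Proof.
move=> SV sS tS.
have cons u : u \in S -> u != Src -> \sum_(w | isarc u w) f u w = 0.
  move=> uS us; apply: fl.2 => //; first exact: (subsetP SV).
  by apply: contraNneq tS => <-.
have E1 : \sum_(u in S) \sum_(w | isarc u w) f u w = flow_value e h f.
  rewrite (bigD1 Src) //= [X in _ + X]big1 ?addr0 // => u /andP[uS us]; exact: cons.
rewrite -E1.
under eq_bigr => u _ do rewrite (bigID (fun w => w \in S)) /=.
rewrite big_split /=.
set X := \sum_(u in S) _.
have -> : X = 0.
  pose G u w := if isarc u w then f u w else 0.
  have GN u w : G w u = - G u w.
    rewrite /G isarc_sym; case: ifP => a; last by rewrite oppr0.
    by rewrite (fl.1 u w a).2.
  have XE : X = \sum_(u in S) \sum_(w in S) G u w.
    apply: eq_bigr => u _; rewrite big_mkcond [RHS]big_mkcond; apply: eq_bigr => w _.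
    by rewrite /G; case: (isarc u w); case: (w \in S).
  have : X = - X.
    rewrite {1}XE exchange_big /= XE -sumrN; apply: eq_bigr => u _.
    by rewrite -sumrN; apply: eq_bigr => w _; rewrite GN.
  move=> H; lra.
rewrite add0r; apply: eq_bigr => u _; apply: eq_bigl => w.
rewrite in_setD; case a: (isarc u w); rewrite ?andbF ?andbT //.
by rewrite (isarc_VH _ _ a) andbT.
Qed.

Lemma weak_dual S : is_st_cut e h S -> ((flow_value e h f)%:E <= cut_cap e h R S)%E.
Proof.
case=> SV sS tS; rewrite (flow_cut _ SV sS tS) -sumEFin /cut_cap.
apply: lee_sum => u _; rewrite -sumEFin; apply: lee_sum => w /andP[_ a].
exact: (fl.1 u w a).1.
Qed.

Lemma sat_cut S : is_st_cut e h S ->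
  (forall u w, u \in S -> w \in VH :\: S -> ~~ resarc e h f u w) ->
  cut_cap e h R S = (flow_value e h f)%:E.
Proof.
case=> SV sS tS H; rewrite (flow_cut _ SV sS tS) -sumEFin; apply: eq_bigr => u uS.
rewrite -sumEFin; apply: eq_bigr => w /andP[wS a].
have := H u w uS wS; rewrite /resarc a /= -leNgt => le.
by apply/le_anti; rewrite le (fl.1 u w a).1.
Qed.

Lemma path_zip (r : rel N) x p : path r x p -> forall q, q \in zip (x :: p) p -> r q.1 q.2.
Proof.
elim: p x => [//|y p IH] x /= /andP[rxy pth] q; rewrite in_cons => /orP[/eqP->//|].
exact: IH.
Qed.

Lemma zip_count1 (x : N) p u :
  (count (fun q : N * N => q.1 == u) (zip (x :: p) p) + (last x p == u) =
   (x == u) + count (pred1 u) p)%N.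
Proof.
elim: p x => [|y p IH] x /=; first by rewrite addn0.
by rewrite -addnA IH.
Qed.

Lemma zip_count2 (x : N) p u :
  count (fun q : N * N => q.2 == u) (zip (x :: p) p) = count (pred1 u) p.
Proof. by elim: p x => [//|y p IH] x /=; rewrite IH. Qed.

Lemma sum_cnt1 (s : seq (N * N)) u : (forall q, q \in s -> isarc q.1 q.2) ->
  (\sum_(w | isarc u w) count (pred1 (u, w)) s = count (fun q => q.1 == u) s)%N.
Proof.
elim: s => [|[a b] s IH] H /=; first by rewrite big1.
rewrite big_split /= IH; last by move=> q qs; apply: H; rewrite in_cons qs orbT.
congr (_ + _)%N.
have ab : isarc a b by apply: (H (a, b)); rewrite in_cons eqxx.
case: (a =P u) => [<-|ne].
  rewrite (bigD1 b) //= eqxx big1 ?addn0 // => w /andP[_ wb].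
  by rewrite xpair_eqE eqxx /= eq_sym (negbTE wb).
by rewrite big1 // => w _; rewrite xpair_eqE; case: (a =P u).
Qed.

Lemma sum_cnt2 (s : seq (N * N)) u : (forall q, q \in s -> isarc q.1 q.2) ->
  (\sum_(w | isarc u w) count (pred1 (w, u)) s = count (fun q => q.2 == u) s)%N.
Proof.
elim: s => [|[a b] s IH] H /=; first by rewrite big1.
rewrite big_split /= IH; last by move=> q qs; apply: H; rewrite in_cons qs orbT.
congr (_ + _)%N.
have ab : isarc a b by apply: (H (a, b)); rewrite in_cons eqxx.
case: (b =P u) => [<-|ne].
  rewrite (bigD1 a) /=; last by rewrite isarc_sym.
  rewrite eqxx big1 ?addn0 // => w /andP[_ wa].
  by rewrite xpair_eqE eqxx andbT eq_sym (negbTE wa).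
by rewrite big1 // => w _; rewrite xpair_eqE; case: (b =P u) => //; rewrite andbF.
Qed.

Lemma augment : connect (resarc e h f) Src Snk ->
  exists g, is_flow e h g /\ flow_value e h f < flow_value e h g.
Proof.
case/connectP => p pth lst.
pose pr := zip (Src :: p) p.
have prres q : q \in pr -> resarc e h f q.1 q.2 by apply: path_zip.
have prarc q : q \in pr -> isarc q.1 q.2 by move/prres => /andP[].
pose cnt u w := count (pred1 (u, w)) pr.
pose gap u w : R := if cap e h R u w is r%:E then r - f u w else 1.
have gap_pos u w : resarc e h f u w -> 0 < gap u w.
  rewrite /resarc /gap => /andP[_]; case: (cap e h R u w) => [r||] //.
  by rewrite lte_fin subr_gt0.
pose m := \big[Num.min/1]_(q : N * N | resarc e h f q.1 q.2) gap q.1 q.2.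
have m_pos : 0 < m.
  rewrite /m; apply: (big_ind (fun x => 0 < x)) => //.
    by move=> x y hx hy; rewrite lt_min hx hy.
  by move=> q; apply: gap_pos.
have m_le u w : resarc e h f u w -> m <= gap u w.
  by move=> r; rewrite /m (bigD1 (u, w)) //= ge_min lexx.
pose n := size p.
pose eps := m / n.+1%:R.
have eps_pos : 0 < eps by rewrite divr_gt0 // ltr0Sn.
have eps_n : eps * n%:R < m.
  by rewrite /eps mulrAC ltr_pdivrMr ?ltr0Sn // ltr_pM2l // ltr_nat.
have cnt_le u w : (cnt u w <= n)%N.
  by apply: leq_trans (count_size _ _) _; rewrite size_zip /n geq_minr.
have cnt_res u w : (0 < cnt u w)%N -> resarc e h f u w.
  by rewrite /cnt -has_count has_pred1 => /prres.
pose g u w := f u w + eps * ((cnt u w)%:R - (cnt w u)%:R).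
have sum1 u : (\sum_(w | isarc u w) cnt u w = count (fun q => q.1 == u) pr)%N.
  exact: sum_cnt1.
have sum2 u : (\sum_(w | isarc u w) cnt w u = count (fun q => q.2 == u) pr)%N.
  exact: sum_cnt2.
have gsum u : \sum_(w | isarc u w) g u w = \sum_(w | isarc u w) f u w +
    eps * ((count (fun q => q.1 == u) pr)%:R - (count (fun q => q.2 == u) pr)%:R).
  by rewrite big_split /= -mulr_sumr sumrB -!natr_sum sum1 sum2.
have c2 u : count (fun q => q.2 == u) pr = count (pred1 u) p by apply: zip_count2.
have c1 := zip_count1 Src p.
exists g; split; last first.
  rewrite /flow_value gsum c2.
  have := c1 Src; rewrite -lst eqxx /= addn0 -/pr => ->.
  rewrite natrD addrK mulr1; lra.
split.
  move=> u w a; split; last first.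
    by rewrite /g (fl.1 u w a).2; ring.
  have fc := (fl.1 u w a).1.
  have [c0|cp] := posnP (cnt u w).
    apply: le_trans fc; rewrite lee_fin /g c0.
    have : 0 <= (cnt w u)%:R :> R by rewrite ler0n.
    nra.
  have r := cnt_res _ _ cp.
  have gp := m_le _ _ r.
  have cn : (cnt u w)%:R <= n%:R :> R by rewrite ler_nat.
  have cw : 0 <= (cnt w u)%:R :> R by rewrite ler0n.
  have gl : g u w < f u w + gap u w.
    rewrite /g; nra.
  move: gl; rewrite /gap; move: r; rewrite /resarc => /andP[_].
  case: (cap e h R u w) => [x||] // _ gl.
    by rewrite lee_fin; apply: ltW; lra.
  exact: leey.
move=> u uV us ut; rewrite gsum (fl.2 u uV us ut) add0r c2.
have := c1 u; rewrite -lst.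
have -> : (Snk == u) = false by apply/negP => /eqP su; move: ut; rewrite su eqxx.
have -> : (Src == u) = false by apply/negP => /eqP su; move: us; rewrite su eqxx.
by rewrite !add0n addn0 => ->; rewrite subrr mulr0.
Qed.

Lemma maxflow_cut : (forall g, is_flow e h g -> flow_value e h g <= flow_value e h f) ->
  exists S, is_st_cut e h S /\
   (forall u w, u \in S -> w \in VH :\: S -> ~~ resarc e h f u w).
Proof.
move=> fm.
exists [set u in VH | connect (resarc e h f) Src u]; split.
  split.
  - by apply/subsetP => u; rewrite in_set => /andP[].
  - by rewrite in_set VH_Src connect0.
  apply/negP; rewrite in_set => /andP[_ c].
  have [g [gf lt]] := augment c; have := fm g gf; lra.
move=> u w; rewrite in_set => /andP[_ cu]; rewrite in_setD in_set => /andP[wnS wV].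
apply/negP => r; move/negP: wnS; apply; rewrite wV /=.
exact: connect_trans cu (connect1 r).
Qed.
End Net.

Section Comb.
Variables (R : realType) (T : finType) (e : rel T) (h : nat).
Hypothesis h_ge2 : (2 <= h)%N.
Local Notation N := (node T).

Lemma clique_sub (A B : {set T}) : is_clique e A -> B \subset A -> is_clique e B.
Proof.
move=> /forall_inP cA BA; apply/forall_inP => x xB; apply/forall_inP => y yB.
by have /forall_inP := cA x (subsetP BA x xB); apply; apply: (subsetP BA).
Qed.

Lemma deg_split (W : {set T}) (v : T) : v \in W ->
  hdeg e h v = (#|[set A : {set T} | hclique e h A & (v \in A) && (A \subset W)]| +
     #|[set l : {set T} in Lam e h | ~~ (l \subset W) && hclique e h (v |: l)]|)%N.
Proof.
move=> vW.
rewrite /hdeg -(cardID [set A : {set T} | A \subset W]); congr (_ + _)%N.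
  by apply: eq_card => A; rewrite !inE andbA.
pose X := [set A : {set T} | hclique e h A & (v \in A) && ~~ (A \subset W)].
have -> : #|[predD [set A | hclique e h A & v \in A] & [set A : {set T} | A \subset W]]| = #|X|.
  by apply: eq_card => A; rewrite !inE andbC andbA.
have -> : [set l : {set T} in Lam e h | ~~ (l \subset W) && hclique e h (v |: l)] =
          (fun A => A :\ v) @: X.
  apply/setP => l; rewrite inE; apply/idP/imsetP.
    case/andP=> lL /andP[lW hc]; exists (v |: l).
      rewrite inE hc /= !inE eqxx /=; apply: contra lW => H.
      exact: subset_trans (subsetUr _ _) H.
    have vl : v \notin l.
      apply/negP => vl; move: hc lL; rewrite /hclique /Lam inE (setUidPr _) ?sub1set //.
      case/andP=> _ /eqP E /andP[/andP[_ /eqP]]; rewrite E; lia.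
    by rewrite setU1K.
  case=> A; rewrite inE => /andP[hA /andP[vA AW]] ->.
  have vAK : v |: (A :\ v) = A by rewrite setD1K.
  rewrite vAK hA andbT.
  apply/andP; split; last first.
    by apply: contra AW => AvW; rewrite -vAK subUset sub1set vW AvW.
  rewrite /Lam inE; apply/andP; split.
    move: hA => /andP[cA /eqP cardA]; apply/andP; split.
      by apply: (clique_sub _ _ cA (subD1set _ _)).
    by move: (cardsD1 v A); rewrite vA cardA => ->.
  by apply/existsP; exists A; rewrite hA subD1set.
rewrite card_in_imset // => A B; rewrite !inE => /andP[_ /andP[vA _]] /andP[_ /andP[vB _]] E.
by rewrite -(setD1K vA) -(setD1K vB) E.
Qed.

Lemma sum_in_clique (W : {set T}) :
  (\sum_(v in W) #|[set A : {set T} | hclique e h A & (v \in A) && (A \subset W)]| =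
   h * mu e h W)%N.
Proof.
pose M := [set A : {set T} | hclique e h A & A \subset W].
have E v : #|[set A : {set T} | hclique e h A & (v \in A) && (A \subset W)]| =
           (\sum_(A in M) (v \in A : nat))%N.
  rewrite -sum1_card big_mkcond [RHS]big_mkcond; apply: eq_bigr => A _; rewrite !inE.
  by case: (hclique e h A); case: (v \in A); case: (A \subset W).
under eq_bigr do rewrite E.
rewrite exchange_big /= /mu -/M.
rewrite (eq_bigr (fun _ => h)); last first.
  move=> A; rewrite inE => /andP[/andP[_ /eqP cA] AW]; rewrite -cA -sum1_card.
  rewrite big_mkcond [RHS]big_mkcond; apply: eq_bigr => v _.
  case vA: (v \in A); last by case: (v \in W).
  by rewrite (subsetP AW _ vA).
by rewrite sum_nat_const mulnC.
Qed.

Lemma rho_star_ge0 : 0 <= rho_star e R h.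
Proof.
rewrite /rho_star; elim/big_ind: _ => //.
  by move=> x y hx _; rewrite le_max hx.
by move=> W _; rewrite /rho divr_ge0 // ler0n.
Qed.

Lemma rho_le (W : {set T}) : W != set0 -> rho e R h W <= rho_star e R h.
Proof. by move=> W0; rewrite /rho_star (bigD1 W) //= le_max lexx. Qed.

Lemma mu_le (W : {set T}) : (mu e h W)%:R <= #|W|%:R * rho_star e R h.
Proof.
case: (eqVneq W set0) => [->|W0].
  have -> : mu e h set0 = 0%N.
    apply/eqP; rewrite cards_eq0; apply/eqP/setP => A; rewrite !inE subset0.
    apply/negP => /andP[/andP[_ /eqP cA] /eqP A0]; move: cA; rewrite A0 cards0; lia.
  by rewrite cards0 !mul0r.
have := rho_le _ W0; rewrite /rho ler_pdivrMr ?ltr0n ?card_gt0 // => H; rewrite mulrC; exact: H.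
Qed.
End Comb.


Section Cut.
Variables (R : realType) (T : finType) (e : rel T) (h : nat).
Hypothesis h_ge2 : (2 <= h)%N.
Local Notation N := (node T).

Lemma Sset_Vx V1 v : (Vx v \in Sset e h V1) = (v \in V1).
Proof.
rewrite /Sset in_setU1 in_setU /=; apply/idP/idP.
  by case/orP=> [/imsetP[v' H [->]]|/imsetP[]].
by move=> H; apply/orP; left; apply/imsetP; exists v.
Qed.

Lemma Sset_Lm V1 l : (Lm l \in Sset e h V1) = (l \in Lam e h) && (l \subset V1).
Proof.
rewrite /Sset in_setU1 in_setU /=; apply/idP/idP.
  case/orP; first by case/imsetP.
  case/imsetP => l' H E; case: E => ->; move: H; rewrite in_set; exact.
by move=> H; apply/orP; right; apply/imsetP; exists l => //; rewrite in_set.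
Qed.

Lemma Sset_cut V1 : is_st_cut e h (Sset e h V1).
Proof.
split.
- apply/subsetP => u; case: u => [||v|l].
  + by rewrite VH_Src.
  + by rewrite /Sset in_setU1 in_setU /=; case/orP => /imsetP[].
  + by rewrite VH_Vx.
  + by rewrite Sset_Lm VH_Lm => /andP[].
- by rewrite /Sset in_setU1 eqxx.
- by apply/negP; rewrite /Sset in_setU1 in_setU /=; case/orP => /imsetP[].
Qed.

Definition capR (u w : N) : R :=
  match u, w with
  | Src, Vx v => (hdeg e h v)%:R
  | Vx _, Snk => h%:R * rho_star e R h
  | Vx v, Lm l => if hclique e h (v |: l) then 1 else 0
  | _, _ => 0
  end.

Lemma closed_cap S : is_st_cut e h S ->
  (forall l v, Lm l \in S -> v \in l -> Vx v \in S) ->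
  cut_cap e h R S = (\sum_(v | Vx v \notin S) (hdeg e h v)%:R +
     \sum_(v | Vx v \in S) (h%:R * rho_star e R h +
        #|[set l : {set T} in Lam e h | (Lm l \notin S) && hclique e h (v |: l)]|%:R))%:E.
Proof.
case=> SV sS tS cl.
have -> : cut_cap e h R S =
    (\sum_(u in S) \sum_(w in VH e h :\: S | isarc e h u w) capR u w)%:E.
  rewrite /cut_cap -sumEFin; apply: eq_bigr => u uS; rewrite -sumEFin.
  apply: eq_bigr => w /andP[wS a].
  case: u uS a => [||v|l]; case: w wS => [||v'|l'] wS uS a //=.
    by case: ifP.
  case: ifP => // vl; have := cl l v' uS vl.
  by move: wS; rewrite in_setD => /andP[/negP].
congr (_%:E).
rewrite big_mkcond node_sum /= sS (negbTE tS) addr0.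
rewrite [X in _ + _ + X]big1 ?addr0; last first.
  by move=> l _; case: ifP => // _; apply: big1 => w _; case: w.
congr (_ + _).
  rewrite big_mkcond node_sum /= [X in _ + X]big1 ?addr0; last by move=> l _; rewrite andbF.
  rewrite !andbF !add0r [RHS]big_mkcond; apply: eq_bigr => v _.
  by rewrite in_setD VH_Vx !andbT.
rewrite [RHS]big_mkcond; apply: eq_bigr => v _; case: ifP => // vS.
rewrite big_mkcond node_sum /= !in_setD sS tS VH_Snk /= add0r.
rewrite big1 ?addr0; last by move=> v' _; rewrite andbF.
congr (_ + _).
rewrite -sum1_card natr_sum [RHS]big_mkcond; apply: eq_bigr => l _.
rewrite in_setD VH_Lm in_set.
by case: (l \in Lam e h); case: (Lm l \in S); case: (hclique e h (v |: l)); rewrite /= ?andbF ?orbT ?andbT ?if_same.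
Qed.

Lemma cap_ge0 (u w : N) : (0 <= cap e h R u w)%E.
Proof.
case: u => [||v|l]; case: w => [||v'|l'] //=.
- by rewrite lee_fin ler0n.
- by rewrite lee_fin mulr_ge0 ?ler0n ?rho_star_ge0.
- by case: ifP.
- by case: ifP => _; rewrite ?leey.
Qed.

Lemma strict_sum (I : finType) (P : pred I) (a : I -> R) (b : I -> \bar R) i0 :
  (forall i, P i -> ((a i)%:E <= b i)%E) -> P i0 -> ((a i0)%:E < b i0)%E ->
  ((\sum_(i | P i) a i)%:E < \sum_(i | P i) b i)%E.
Proof.
move=> H P0 lt; rewrite -sumEFin (bigD1 i0) //= [X in (_ < X)%E](bigD1 i0) //=.
apply: lte_leD => //; first by rewrite sumEFin.
by apply: lee_sum => i /andP[Pi _]; apply: H.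
Qed.

Definition Dsum : R := \sum_(v : T) (hdeg e h v)%:R.

Lemma cap_Sset V1 : cut_cap e h R (Sset e h V1) =
  (Dsum + #|V1|%:R * (h%:R * rho_star e R h) - h%:R * (mu e h V1)%:R)%:E.
Proof.
have cl l v : Lm l \in Sset e h V1 -> v \in l -> Vx v \in Sset e h V1.
  by rewrite Sset_Lm Sset_Vx => /andP[_ lV] vl; apply: (subsetP lV).
rewrite (closed_cap _ (Sset_cut V1) cl).
congr (_%:E).
under eq_bigl do rewrite Sset_Vx.
under [X in _ + X = _]eq_bigl do rewrite Sset_Vx.
have Ec v : [set l : {set T} in Lam e h | (Lm l \notin Sset e h V1) && hclique e h (v |: l)] =
    [set l : {set T} in Lam e h | ~~ (l \subset V1) && hclique e h (v |: l)].
  by apply/setP => l; rewrite in_set [RHS]in_set Sset_Lm; case: (l \in Lam e h).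
under [X in _ + X = _]eq_bigr do rewrite Ec.
have Hd : \sum_(v in V1) (hdeg e h v)%:R = h%:R * (mu e h V1)%:R +
   \sum_(v in V1) (#|[set l : {set T} in Lam e h | ~~ (l \subset V1) && hclique e h (v |: l)]|%:R : R).
  rewrite (eq_bigr (fun v => (#|[set A : {set T} | hclique e h A & (v \in A) && (A \subset V1)]|%:R : R) +
      #|[set l : {set T} in Lam e h | ~~ (l \subset V1) && hclique e h (v |: l)]|%:R)); last first.
    by move=> v vV; rewrite (@deg_split _ _ _ h_ge2 _ _ vV) natrD.
  by rewrite big_split /= -natr_sum sum_in_clique natrM.
rewrite /Dsum [\sum_v _](bigID (fun v => v \in V1)) /= Hd big_split /= sumr_const -mulr_natl.
by rewrite addrC; ring.
Qed.

Lemma cut_lower S : is_st_cut e h S -> (Dsum%:E <= cut_cap e h R S)%E.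
Proof.
move=> cS; have [SV sS tS] := cS.
case: (boolP [forall l : {set T}, forall v : T, (Lm l \in S) && (v \in l) ==> (Vx v \in S)]).
  move=> /forallP clb.
  have cl l v : Lm l \in S -> v \in l -> Vx v \in S.
    by move=> lS vl; have /forallP/(_ v) := clb l; rewrite lS vl.
  rewrite (closed_cap _ cS cl) lee_fin.
  pose V' := [set v | Vx v \in S].
  have EV v : (Vx v \in S) = (v \in V') by rewrite in_set.
  under eq_bigl do rewrite EV.
  under [X in _ <= _ + X]eq_bigl do rewrite EV.
  have Hc v : (#|[set l : {set T} in Lam e h | ~~ (l \subset V') && hclique e h (v |: l)]|%:R : R)
      <= #|[set l : {set T} in Lam e h | (Lm l \notin S) && hclique e h (v |: l)]|%:R.
    rewrite ler_nat; apply: subset_leq_card; apply/subsetP => l.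
    rewrite !in_set => /andP[-> /andP[lV ->]]; rewrite andbT /=.
    apply: contra lV => lS; apply/subsetP => x xl; rewrite in_set; exact: (cl _ _ lS xl).
  have Hd : \sum_(v in V') (hdeg e h v)%:R = h%:R * (mu e h V')%:R +
     \sum_(v in V') (#|[set l : {set T} in Lam e h | ~~ (l \subset V') && hclique e h (v |: l)]|%:R : R).
    rewrite (eq_bigr (fun v => (#|[set A : {set T} | hclique e h A & (v \in A) && (A \subset V')]|%:R : R) +
        #|[set l : {set T} in Lam e h | ~~ (l \subset V') && hclique e h (v |: l)]|%:R)); last first.
      by move=> v vV; rewrite (@deg_split _ _ _ h_ge2 _ _ vV) natrD.
    by rewrite big_split /= -natr_sum sum_in_clique natrM.
  have Hs : \sum_(v in V') (#|[set l : {set T} in Lam e h | ~~ (l \subset V') && hclique e h (v |: l)]|%:R : R)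
      <= \sum_(v in V') (#|[set l : {set T} in Lam e h | (Lm l \notin S) && hclique e h (v |: l)]|%:R : R).
    by apply: ler_sum => v _; apply: Hc.
  have Hm := @mu_le R _ e h h_ge2 V'.
  have hpos : (0 : R) <= h%:R by rewrite ler0n.
  have Hm' : h%:R * (mu e h V')%:R <= h%:R * (#|V'|%:R * rho_star e R h) by rewrite ler_wpM2l.
  rewrite /Dsum [\sum_v _](bigID (fun v => v \in V')) /= Hd big_split /= sumr_const -mulr_natl.
  lra.
rewrite negb_forall => /existsP[l]; rewrite negb_forall => /existsP[v].
rewrite negb_imply => /andP[/andP[lS vl] vS].
apply: le_trans (leey _) _.
have lL : l \in Lam e h by rewrite -VH_Lm (subsetP SV).
have ge0 u : (0 <= \sum_(w in VH e h :\: S | isarc e h u w) cap e h R u w)%E.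
  by apply: sume_ge0 => w _; apply: cap_ge0.
rewrite /cut_cap (bigD1 (Lm l)) //=.
apply: le_trans (leeDl _ _); last by apply: sume_ge0 => u _; apply: ge0.
rewrite (bigD1 (Vx v)) /=; last by rewrite in_setD VH_Vx vS lL vl.
rewrite vl; apply: le_trans (leeDl _ _) => //.
by apply: sume_ge0 => w _; exact: (cap_ge0 (Lm l) w).
Qed.
End Cut.

Theorem lemma3 (R : realType) (T : finType) (e : rel T)
  (e_sym : symmetric e) (e_irr : irreflexive e) (h : nat) (h_ge2 : (2 <= h)%N)
  (f : node T -> node T -> R) (fmax : is_max_flow e h f)
  (V1 : {set T}) (V1_ne : V1 != set0) :
  [<-> rho e R h V1 = rho_star e R h;
       is_min_cut e h R (Sset e h V1);
       forall u w, u \in Sset e h V1 -> w \in VH e h :\: Sset e h V1 ->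
         ~~ resarc e h f u w].
Proof.
have [fl fm] := fmax.
have [R0 [R0c R0n]] := maxflow_cut _ _ _ _ _ fl fm.
have R0cap := sat_cut _ _ _ _ _ fl _ R0c R0n.
have K1 := cap_Sset R T e h h_ge2.
have K2 := cut_lower R T e h h_ge2.
have V1pos : (0 : R) < #|V1|%:R by rewrite ltr0n card_gt0.
have hpos : (0 : R) < h%:R by rewrite ltr0n; lia.
tfae.
- move=> H1; split; first exact: Sset_cut.
  move=> S' cS'; apply: le_trans (K2 S' cS'); rewrite K1 lee_fin.
  have E : (mu e h V1)%:R = #|V1|%:R * (rho_star e R h).
    by rewrite -H1 /rho mulrC divfK // gt_eqF.
  rewrite E.
  have -> : (Dsum R T e h) + #|V1|%:R * (h%:R * (rho_star e R h)) - h%:R * (#|V1|%:R * (rho_star e R h)) = (Dsum R T e h) by ring.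
  exact: lexx.
- move=> H2 u w uS wS; apply/negP => /andP[a lt].
  have [SV sS tS] := Sset_cut T e h V1.
  have le : (cut_cap e h R (Sset e h V1) <= (flow_value e h f)%:E)%E.
    by rewrite -R0cap; apply: H2.2.
  suff : ((flow_value e h f)%:E < cut_cap e h R (Sset e h V1))%E.
    by move=> lt2; have := lt_le_trans lt2 le; rewrite ltxx.
  rewrite (flow_cut _ _ _ _ _ fl _ SV sS tS) /cut_cap.
  apply: (strict_sum _ _ _ _ _ u) => //.
    move=> u' _; rewrite -sumEFin; apply: lee_sum => w' /andP[_ a'].
    exact: (fl.1 u' w' a').1.
  apply: (strict_sum _ _ _ _ _ w) => //; last by rewrite wS a.
  by move=> w' /andP[_ a']; exact: (fl.1 u w' a').1.
- move=> H3.
  have E := sat_cut _ _ _ _ _ fl _ (Sset_cut T e h V1) H3.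
  have := weak_dual _ _ _ _ _ fl _ (Sset_cut T e h set0).
  rewrite -E !K1 lee_fin cards0 mul0r addr0 => H.
  have m0 : (0 : R) <= (mu e h set0)%:R by rewrite ler0n.
  have hm0 : (0 : R) <= h%:R * (mu e h set0)%:R by apply: mulr_ge0; [exact: ltW|].
  have H' : h%:R * (#|V1|%:R * (rho_star e R h) - (mu e h V1)%:R) <= 0.
    have -> : h%:R * (#|V1|%:R * (rho_star e R h) - (mu e h V1)%:R) =
      ((Dsum R T e h) + #|V1|%:R * (h%:R * (rho_star e R h)) - h%:R * (mu e h V1)%:R) - (Dsum R T e h) by ring.
    lra.
  have H'' : #|V1|%:R * (rho_star e R h) <= (mu e h V1)%:R.
    by rewrite -subr_le0; move: H'; rewrite pmulr_rle0.
  apply/le_anti; rewrite rho_le //= /rho ler_pdivlMr // mulrC; exact: H''.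
Qed.
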